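(* Let $M$ be a principally Goldie*-lifting right $R$-module having the summand sum property. Then every direct summand of $M$ is principally Goldie*-lifting.
   Context: $R$ is an associative ring with identity; modules are unital right $R$-modules. $M$ has the summand sum property (SSP) if the sum of any two direct summands of $M$ is a direct summand of $M$. $K\ll L$ means $K$ is small in $L$. For submodules $X,Y$ of a module $L$, $X\,\beta^*\,Y$ means $(X+Y)/X\ll L/X$ and $(X+Y)/Y\ll L/Y$. A module $L$ is principally Goldie*-lifting if for every cyclic submodule $X$ of $L$ there is a direct summand $D$ of $L$ with $X\,\beta^*\,D$. *)

(* Defs.v *)
(* Right R-modules are modelled as left modules over the
   converse ring R^c: for x : M and r : R, the right action x r is r *: x. *)
From HB Require Import structures.
From mathcomp Require Import all_boot all_order all_algebra.
Set Implicit Arguments. Unset Strict Implicit. Unset Printing Implicit Defensive.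
Import GRing.Theory.
Local Open Scope ring_scope.

Section ModuleDefs.
Variable R : pzRingType.
Variable M : lmodType R^c.

Definition msub := M -> Prop.

Definition incl (X Y : msub) := forall x, X x -> Y x.
Definition meq (X Y : msub) := forall x, X x <-> Y x.

Definition is_submodule (X : msub) : Prop :=
  X 0 /\ (forall x y, X x -> X y -> X (x + y)) /\
  (forall (r : R^c) x, X x -> X (r *: x)).

Definition msum (X Y : msub) : msub :=
  fun z => exists x y, X x /\ Y y /\ z = x + y.

Definition mfull : msub := fun _ => True.

Definition direct_summand_of (L D : msub) : Prop :=
  is_submodule D /\ incl D L /\
  exists E, is_submodule E /\ incl E L /\ meq (msum D E) L /\
            (forall z, D z -> E z -> z = 0).

Definition cyclic_sub_of (L X : msub) : Prop :=
  exists x, L x /\ meq X (fun z => exists r : R^c, z = r *: x).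

(* K/X << L/X, for submodules X <= K <= L of M, unfolded through the
   correspondence between submodules of L/X and submodules N with X <= N <= L:
   every submodule N/X of L/X with K/X + N/X = L/X equals L/X. *)
Definition small_mod (L X K : msub) : Prop :=
  forall N, is_submodule N -> incl X N -> incl N L ->
    meq (msum K N) L -> meq N L.

Definition beta_star (L X Y : msub) : Prop :=
  small_mod L X (msum X Y) /\ small_mod L Y (msum X Y).

Definition pG_lifting (L : msub) : Prop :=
  forall X, is_submodule X -> cyclic_sub_of L X ->
    exists D, direct_summand_of L D /\ beta_star L X D.

Definition SSP : Prop :=
  forall D1 D2, direct_summand_of mfull D1 -> direct_summand_of mfull D2 ->
    direct_summand_of mfull (msum D1 D2).

End ModuleDefs.

(* Main.v *)
Require Import Defs.
From HB Require Import structures.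
From mathcomp Require Import all_boot all_order all_algebra.
Import GRing.Theory.
Local Open Scope ring_scope.
Set Implicit Arguments. Unset Strict Implicit.

Section Aux.
Variable R : pzRingType.
Variable M : lmodType R^c.
Implicit Types X Y A K : msub M.

Lemma sub_opp X x : is_submodule X -> X x -> X (- x).
Proof. move=> [_ [_ Hs]] Hx; rewrite -scaleN1r; exact: Hs. Qed.

Lemma sub_sub X x y : is_submodule X -> X x -> X y -> X (x - y).
Proof. move=> HX Hx Hy; case: (HX) => [_ [Ha _]]; apply: Ha => //; exact: sub_opp. Qed.

Definition proj (E S : msub M) : msub M := fun n => exists d, S d /\ E (d - n).

Lemma proj_sub (N E S : msub M) : is_submodule N -> is_submodule E -> is_submodule S ->
  is_submodule (fun n => N n /\ proj E S n).
Proof.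
move=> [N0 [Na Ns]] [E0 [Ea Es]] [S0 [Sa Ss]]; split; [|split].
- split=> //; exists 0; split=> //; by rewrite subr0.
- move=> x y [Nx [d1 [S1 E1]]] [Ny [d2 [S2 E2]]]; split; first exact: Na.
  exists (d1 + d2); split; first exact: Sa.
  have -> : d1 + d2 - (x + y) = (d1 - x) + (d2 - y).
    by rewrite opprD addrACA.
  exact: Ea.
- move=> r x [Nx [d [Sd Ed]]]; split; first exact: Ns.
  exists (r *: d); split; first exact: Ss.
  rewrite -scalerBr; exact: Es.
Qed.

Lemma small_transfer (N E A A' K K' : msub M) :
  is_submodule N -> is_submodule E -> meq (msum N E) (@mfull R M) ->
  (forall z, N z -> E z -> z = 0) ->
  small_mod (@mfull R M) A K ->
  (forall a, A a -> exists n, A' n /\ E (a - n)) ->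
  (forall k', K' k' -> exists k, K k /\ E (k - k')) ->
  small_mod N A' K'.
Proof.
move=> HN HE Hsum Hint Hsm HA HK Y HY HAY HYN HKY z.
split; first exact: HYN.
move=> Nz.
set Y' : msub M := fun m => exists y, Y y /\ E (m - y).
have HY' : is_submodule Y'.
  case: HY => [Y0 [Ya Ys]]; case: (HE) => [E0 [Ea Es]]; split; [|split].
  - exists 0; split=> //; by rewrite subr0.
  - move=> x y [y1 [H1 E1]] [y2 [H2 E2]]; exists (y1 + y2); split; first exact: Ya.
    have -> : x + y - (y1 + y2) = (x - y1) + (y - y2) by rewrite opprD addrACA.
    exact: Ea.
  - move=> r x [y [Hy Ey]]; exists (r *: y); split; first exact: Ys.
    rewrite -scalerBr; exact: Es.
have Hfull := Hsm Y' HY'.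
have [] := Hfull _ _ _ z.
- move=> a Aa; have [n [A'n En]] := HA a Aa; exists n; split=> //; exact: HAY.
- by [].
- move=> m; split=> // _.
  have [p [e [Np [Ee ->]]]] := (proj2 (Hsum m) I).
  have : N p by [].
  move=> /(proj2 (HKY p)) [k' [y [Kk' [Yy Hp]]]].
  have [k [Kk Ek]] := HK k' Kk'.
  exists k, (p + e - k); split=> //; split; last by rewrite subrKC.
  exists y; split=> //.
  have -> : p + e - k - y = e - (k - k') by rewrite Hp opprB [_ - y]addrAC [k' + y + e]addrAC addrK addrC addrA addrC [- k + _]addrC.
  exact: sub_sub.
- move=> _ /(_ I) [y [Yy Ey]].
  have -> : z = y; last by [].
  apply/eqP; rewrite -subr_eq0; apply/eqP; apply: Hint => //.
  apply: sub_sub => //; exact: HYN.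
Qed.

End Aux.

Lemma alg1 (V : zmodType) (d e f nd nf : V) : d + e + f - (nd + nf) = e + ((d - nd) + (f - nf)).
Proof. rewrite [d + e]addrC -(addrA e) -(addrA e); congr (_ + _); by rewrite opprD addrACA. Qed.

Theorem proposition3p12 (R : pzRingType) (M : lmodType R^c) :
  pG_lifting (@mfull R M) -> SSP M ->
  forall N : msub M, direct_summand_of (@mfull R M) N -> pG_lifting N.
Proof.
move=> HM HS N [HN [_ [E [HE [_ [Hsum Hint]]]]]] X HX [x [Nx HXx]].
have XN : incl X N.
  move=> z /(proj1 (HXx z)) [r ->]; case: HN => [_ [_ Hs]]; exact: Hs.
have [D [HDs [B1 B2]]] : exists D, direct_summand_of (@mfull R M) D /\ beta_star (@mfull R M) X D.
  apply: HM => //; by exists x.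
have HD : is_submodule D by case: HDs.
have HEs : direct_summand_of (@mfull R M) E.
  split=> //; split=> //; exists N; split=> //; split=> //; split.
  - move=> z; split=> // _; have [a [b [Na [Eb ->]]]] := proj2 (Hsum z) I.
    by exists b, a; rewrite addrC.
  - by move=> z Ez Nz; apply: Hint.
have [_ [_ [F [HF [_ [HsumF HintF]]]]]] := HS D E HDs HEs.
have decomp : forall m, exists n, N n /\ E (m - n).
  move=> m; have [a [b [Na [Eb ->]]]] := proj2 (Hsum m) I.
  by exists a; split=> //; rewrite addrC addKr.
have HNa : forall a b, N a -> N b -> N (a + b) by case: HN => [_ []].
have HEa : forall a b, E a -> E b -> E (a + b) by case: HE => [_ []].
have HE0 : E 0 by case: HE.
exists (fun n => N n /\ proj E D n); split.
- split; first exact: proj_sub.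
  split; first by move=> z [].
  exists (fun n => N n /\ proj E F n); split; first exact: proj_sub.
  split; first by move=> z [].
  split.
  + move=> n; split.
      by move=> [a [b [[Na _] [[Nb _] ->]]]]; apply: (HNa).
    move=> Nn; have [s [f [[d [e [Dd [Ee ->]]]] [Ff Hn]]]] := proj2 (HsumF n) I.
    have [nd [Nnd End]] := decomp d; have [nf [Nnf Enf]] := decomp f.
    exists nd, nf; split; first by split=> //; exists d.
    split; first by split=> //; exists f.
    apply/eqP; rewrite -subr_eq0; apply/eqP; apply: Hint.
      by apply: sub_sub => //; apply: (HNa).
    rewrite Hn alg1; apply: (HEa) => //; exact: HEa.
  + move=> z [Nz [d [Dd Ed]]] [_ [f [Ff Ef]]].
    have f0 : f = 0.
      apply: HintF => //; exists d, (f - d); split=> //; split; last by rewrite subrKC.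
      have -> : f - d = (f - z) + (z - d) by rewrite subrKA.
      by apply: (HEa) => //; rewrite -opprB; apply: sub_opp.
    apply: Hint => //; rewrite -[z]opprK; apply: sub_opp => //.
    by move: Ef; rewrite f0 sub0r.
- have HK : forall k', msum X (fun n => N n /\ proj E D n) k' ->
      exists k, msum X D k /\ E (k - k').
    move=> _ [a [p [Xa [[Np [d [Dd Ed]]] ->]]]].
    exists (a + d); split; first by exists a, d.
    by rewrite [a + d]addrC addrKA.
  split.
  + apply: (small_transfer HN HE Hsum Hint B1) => //.
    by move=> a Xa; exists a; rewrite subrr.
  + apply: (small_transfer HN HE Hsum Hint B2) => //.
    move=> a Da; have [n [Nn En]] := decomp a.
    by exists n; split=> //; split=> //; exists a.
Qed.
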